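(* If $q>0$ is an equilibrium price of the TWDPP mechanism, then $\mathrm{Welfare}(\vec x(q))\ge\frac{\mathrm{OPT}}{2(1+\delta)}\min\{1,\delta\}$.
   Context: Dynamic posted-price setting: at each time step a block with $m$ slots is produced; $n$ bidders arrive with values $v_1,\dots,v_n$ drawn i.i.d. from a distribution $F$, each participating once and bidding truthfully. Given posted price $q>0$, $M(q)=\{i:v_i\ge q\}$, $N(q)=|M(q)|$. TWDPP: $B$ is chosen uniformly at random among subsets of $M(q)$ of size $\min\{m,N(q)\}$; $x_i(q)=1$ if $i\in B$ (and $i$ pays $q$), else $0$; the next price is $T_{TW}(q,B)=\alpha\frac1m\sum_{i\in B}\min\{b_i,(1+\delta)q\}+(1-\alpha)q$ if $|B|<m$ and $\alpha(1+\delta)q+(1-\alpha)q$ if $|B|=m$, with $\alpha\in(0,1)$, $\delta\in(0,\infty)$. An equilibrium price is a price $q$ with $\mathbb{E}[T_{TW}(q,B)]=q$, expectation over values and the random allocation. $\mathrm{Welfare}(\vec x(q))=\mathbb{E}[\sum_i v_i x_i(q)]$, and $\mathrm{OPT}$ is the expected sum of the $\min\{m,n\}$ largest values. *)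

(* Defs.v *)
From HB Require Import structures.
From mathcomp Require Import all_boot all_order all_algebra.
From mathcomp Require Import all_classical all_reals all_analysis.
Set Implicit Arguments. Unset Strict Implicit. Unset Printing Implicit Defensive.
Import Order.TTheory GRing.Theory Num.Theory.
Local Open Scope classical_set_scope.
Local Open Scope ring_scope.

Section TWDPP.
Variable R : realType.

Definition Mset n (v : 'I_n -> R) (q : R) : {set 'I_n} := [set i | q <= v i].

(* the support of the uniform random block B: subsets of M(q) of size min{m, N(q)} *)
Definition blocks n (m : nat) (v : 'I_n -> R) (q : R) : {set {set 'I_n}} :=
  [set B : {set 'I_n} | (B \subset Mset v q) && (#|B| == minn m #|Mset v q|)].

(* expectation over the uniform random allocation B (values v fixed) *)
Definition avgB n (m : nat) (v : 'I_n -> R) (q : R) (g : {set 'I_n} -> R) : R :=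
  (\sum_(B in blocks m v q) g B) / (#|blocks m v q|)%:R.

(* next price T_TW(q, B); bids are truthful, b_i = v_i *)
Definition T_TW n (m : nat) (alpha delta : R) (v : 'I_n -> R) (q : R)
  (B : {set 'I_n}) : R :=
  if (#|B| < m)%N then
    alpha * (m%:R^-1 * \sum_(i in B) Num.min (v i) ((1 + delta) * q)) + (1 - alpha) * q
  else alpha * ((1 + delta) * q) + (1 - alpha) * q.

Definition welfare_of n (v : 'I_n -> R) (B : {set 'I_n}) : R := \sum_(i in B) v i.

Definition top_sum n (m : nat) (v : 'I_n -> R) : R :=
  \sum_(x <- take (minn m n) (sort (fun a b : R => b <= a) [seq v i | i <- enum 'I_n])) x.

Definition iid_with {d} {T : measurableType d} (P : probability T R) n
  (X : 'I_n -> T -> R) (F : probability R R) : Prop :=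
  (forall i, measurable_fun setT (X i)) /\
  forall A : 'I_n -> set R, (forall i, measurable (A i)) ->
    P (\bigcap_(i in [set: 'I_n]) (X i @^-1` A i)) = (\prod_(i < n) F (A i))%E.

End TWDPP.

(* Main.v *)
Require Import Defs.
From HB Require Import structures.
From mathcomp Require Import all_boot all_order all_algebra.
From mathcomp Require Import all_classical all_reals all_analysis.
From mathcomp Require Import measurable_realfun.
From mathcomp Require Import ring lra zify.
Import Order.TTheory GRing.Theory Num.Theory.
Local Open Scope classical_set_scope.
Local Open Scope ring_scope.
Section helpers.
Local Open Scope ereal_scope.
Import HBNNSimple.

Lemma le_int_nm d (T : measurableType d) (R : realType)
  (mu : {measure set T -> \bar R}) (f g : T -> \bar R) :
  (forall x, f x <= g x) -> \int[mu]_x f x <= \int[mu]_x g x.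
Proof.
move=> fg; rewrite (integralE _ _ f) (integralE _ _ g).
have fgp := @funepos_le _ _ setT f g (fun x _ => fg x).
have fgn := @funeneg_le _ _ setT f g (fun x _ => fg x).
have p1 : forall x, 0 <= f^\+ x by move=> x; exact: funepos_ge0.
have p2 : forall x, 0 <= g^\+ x by move=> x; exact: funepos_ge0.
have n1 : forall x, 0 <= f^\- x by move=> x; exact: funeneg_ge0.
have n2 : forall x, 0 <= g^\- x by move=> x; exact: funeneg_ge0.
apply: leeB.
- rewrite (ge0_integralTE _ p1) (ge0_integralTE _ p2).
  apply: ereal_sup_le => _ [h hf <-]; exists h => //= x.
  by apply: le_trans (hf x) _; apply: fgp; rewrite inE.
- rewrite (ge0_integralTE _ n1) (ge0_integralTE _ n2).
  apply: ereal_sup_le => _ [h hf <-]; exists h => //= x.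
  by apply: le_trans (hf x) _; apply: fgn; rewrite inE.
Qed.
End helpers.

Section helpers2.
Local Open Scope ereal_scope.

Lemma int_indep d (T : measurableType d) (R : realType) (P : probability T R)
  (F : probability R R) (Y : T -> R) (G : set T) (f : R -> \bar R) :
  measurable_fun setT Y -> measurable G -> measurable_fun [set: R] f ->
  (forall x, 0 <= f x) ->
  (forall A, measurable A -> P (Y @^-1` A `&` G) = F A * P G) ->
  \int[P]_(x in G) f (Y x) = P G * \int[F]_x f x.
Proof.
move=> mY mG mf f0 HA.
rewrite (eq_measure_integral (mrestr P mG)); last first.
  by move=> A mA AG; transitivity (P (A `&` G)); first by rewrite setIidl.
have mfY : measurable_fun setT (f \o Y) by exact: measurableT_comp.
have -> : \int[mrestr P mG]_(x in G) f (Y x) = \int[mrestr P mG]_x f (Y x).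
  rewrite -(setUv G) (ge0_integral_setU _ mG (measurableC mG)); first last.
  - by rewrite disj_set2E setICr.
  - by move=> x _; exact: f0.
  - by rewrite setUv.
  rewrite (null_set_integral (measurableC mG)) ?adde0 //.
  - exact: measurable_funS mfY.
  - by transitivity (P (~` G `&` G)); [by [] | rewrite setICl measure0].
rewrite -(preimage_setT Y) -(ge0_integral_pushforward mY) //.
have PG0 : (0 <= fine (P G))%R by apply: fine_ge0; exact: measure_ge0.
rewrite (eq_measure_integral (mscale (NngNum PG0) F)); last first.
  move=> A mA _; transitivity (P (Y @^-1` A `&` G)); first by [].
  rewrite HA // muleC; transitivity ((fine (P G))%:E * F A); last by [].
  by rewrite fineK // fin_num_measure.
by rewrite ge0_integral_mscale //= fineK // fin_num_measure.
Qed.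

End helpers2.

Section Pat.
Variables (R : realType) (d : measure_display) (T : measurableType d)
  (P : probability T R) (F : probability R R) (n : nat)
  (X : 'I_n -> T -> R) (q : R).
Hypothesis iid : iid_with P X F.

Definition pat (w : T) : {set 'I_n} := [set j | q <= X j w].

Definition Apat (S : {set 'I_n}) (j : 'I_n) : set R :=
  if j \in S then [set x | q <= x] else [set x | x < q].

Lemma Apat_meas S j : measurable (Apat S j).
Proof.
rewrite /Apat; case: ifP => _.
- by rewrite -set_itvcy; exact: measurable_itv.
- by rewrite -set_itvNyo; exact: measurable_itv.
Qed.

Lemma ApatE S j x : Apat S j x <-> ((q <= x) = (j \in S)).
Proof.
rewrite /Apat; case: (j \in S) => /=; [|rewrite ltNge];
  by case: (q <= x); split.
Qed.

Lemma patP w S : (forall j, Apat S j (X j w)) <-> pat w = S.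
Proof.
split.
- move=> H; apply/setP => j; rewrite inE; exact/ApatE.
- by move=> <- j; apply/ApatE; rewrite inE.
Qed.

Lemma mX j : measurable_fun setT (X j).
Proof. exact: iid.1. Qed.

Lemma rectE (A : 'I_n -> set R) :
  [set w | forall j, A j (X j w)] = \bigcap_(j in [set: 'I_n]) (X j @^-1` A j).
Proof.
by apply/seteqP; split => w /= H j; [move=> _; exact: H | exact: H].
Qed.

Lemma rect_meas (A : 'I_n -> set R) : (forall j, measurable (A j)) ->
  measurable [set w | forall j, A j (X j w)].
Proof.
move=> mA; rewrite rectE; apply: fin_bigcap_measurable; first exact: finite_finset.
by move=> j _; rewrite -[X in measurable X]setTI; apply: mX.
Qed.

Lemma rect_prob (A : 'I_n -> set R) : (forall j, measurable (A j)) ->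
  P [set w | forall j, A j (X j w)] = (\prod_(j < n) F (A j))%E.
Proof. by move=> mA; rewrite rectE; apply: iid.2. Qed.

Lemma pat_meas (Q : pred {set 'I_n}) : measurable [set w | Q (pat w)].
Proof.
rewrite (_ : [set w | Q (pat w)] =
   \bigcup_(S in [set S | Q S]) [set w | forall j, Apat S j (X j w)]).
  apply: fin_bigcup_measurable; first exact: finite_finset.
  by move=> S _; apply: rect_meas => j; exact: Apat_meas.
apply/seteqP; split => w /=.
- by move=> HQ; exists (pat w) => //; apply/patP.
- by move=> [S HS /patP ->].
Qed.

Lemma pat_fun_meas (h : {set 'I_n} -> R) : measurable_fun setT (fun w => h (pat w)).
Proof.
move=> _ Y mY; rewrite setTI.
rewrite (_ : _ @^-1` Y = [set w | `[< Y (h (pat w)) >]]).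
  exact: (pat_meas (fun S => `[< Y (h S) >])).
by apply/seteqP; split => w /=; [move=> H; exact/asboolP | move/asboolP].
Qed.


Definition Ai (i : 'I_n) (B : set R) (S : {set 'I_n}) (j : 'I_n) : set R :=
  if j == i then B else Apat S j.

Definition cS (i : 'I_n) (S : {set 'I_n}) := (\prod_(j < n | j != i) F (Apat S j))%E.

Lemma Ai_pat i B (S : {set 'I_n}) (w : T) : i \notin S -> (forall j, Ai i B S j (X j w)) ->
  pat w :\ i = S.
Proof.
move=> iS H; apply/setP => j; rewrite !inE; case: (eqVneq j i) => [->|ji] /=.
  by rewrite (negbTE iS).
by have := H j; rewrite /Ai (negbTE ji) => /ApatE.
Qed.

Lemma Ai_meas i B (S : {set 'I_n}) : measurable B -> forall j, measurable (Ai i B S j).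
Proof. by move=> mB j; rewrite /Ai; case: eqP => _ //; exact: Apat_meas. Qed.

Lemma indep_form (i : 'I_n) (Q : pred {set 'I_n}) (B : set R) : measurable B ->
  P (X i @^-1` B `&` [set w | Q (pat w :\ i)]) =
  (F B * \sum_(S \in [set S : {set 'I_n} | (i \notin S) && Q S]) cS i S)%E.
Proof.
move=> mB.
set D := [set S : {set 'I_n} | (i \notin S) && Q S].
have E : X i @^-1` B `&` [set w | Q (pat w :\ i)] =
    \bigcup_(S in D) [set w | forall j, Ai i B S j (X j w)].
  apply/seteqP; split => w /=.
  - move=> [HB HQ]; exists (pat w :\ i).
      by rewrite /D /= setD11 HQ.
    move=> j; rewrite /Ai; case: eqP => [-> //|/eqP ji].
    by apply/ApatE; rewrite !inE ji.
  - move=> [S /andP[iS HQ] H]; split.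
      by have := H i; rewrite /Ai eqxx.
    by rewrite (Ai_pat _ _ _ _ iS H).
rewrite E measure_fin_bigcup //; last 3 first.
- exact: finite_finset.
- move=> S S' /andP[iS _] /andP[iS' _] [w [H1 H2]].
  by rewrite -(Ai_pat _ _ _ _ iS H1) -(Ai_pat _ _ _ _ iS' H2).
- by move=> S _; apply: rect_meas; exact: Ai_meas.
rewrite ge0_mule_fsumr; last by move=> S; apply: prode_ge0 => j _; exact: measure_ge0.
apply: eq_fsbigr => S _; transitivity (\prod_(j < n) F (Ai i B S j))%E.
  by apply: rect_prob; exact: Ai_meas.
rewrite (bigD1 i) //= /Ai eqxx; congr (_ * _)%E; apply: eq_bigr => j ji.
by rewrite (negbTE ji).
Qed.

Lemma indep_set (i : 'I_n) (Q : pred {set 'I_n}) (B : set R) : measurable B ->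
  P (X i @^-1` B `&` [set w | Q (pat w :\ i)]) =
  (F B * P [set w | Q (pat w :\ i)])%E.
Proof.
move=> mB; rewrite indep_form //; congr (_ * _)%E.
rewrite -[in RHS](setTI [set w | Q (pat w :\ i)]) -(preimage_setT (X i)).
by rewrite indep_form // probability_setT mul1e.
Qed.

End Pat.

Section PW.
Variables (R : realType) (n m : nat) (v : 'I_n -> R) (q alpha delta : R).
Hypothesis m0 : (0 < m)%N.
Hypothesis q0 : 0 < q.
Hypothesis a01 : 0 < alpha < 1.
Hypothesis d0 : 0 < delta.

Let M := Mset v q.
Let K := minn m #|M|.

Lemma blocks_gt0 : (0 < #|blocks m v q|)%N.
Proof. by rewrite /blocks cards_draws bin_gt0 geq_minr. Qed.

Lemma inblocks B : B \in blocks m v q -> (B \subset M) /\ #|B| = K.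
Proof. by rewrite inE => /andP[-> /eqP ->]. Qed.

Lemma avg_ge (g : {set 'I_n} -> R) c :
  (forall B, B \in blocks m v q -> c <= g B) -> c <= avgB m v q g.
Proof.
move=> H; rewrite /avgB ler_pdivlMr; last by rewrite ltr0n blocks_gt0.
rewrite mulr_natr -sumr_const; apply: ler_sum => B; exact: H.
Qed.

Lemma avg_le (g : {set 'I_n} -> R) c :
  (forall B, B \in blocks m v q -> g B <= c) -> avgB m v q g <= c.
Proof.
move=> H; rewrite /avgB ler_pdivrMr; last by rewrite ltr0n blocks_gt0.
rewrite mulr_natr -sumr_const; apply: ler_sum => B; exact: H.
Qed.

Definition Dd i := Num.max (v i - q) 0.

Lemma Dd_ge0 i : 0 <= Dd i.
Proof. by rewrite /Dd le_max lexx orbT. Qed.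

Lemma PW1 : q * K%:R + \sum_i Dd i * (#|M :\ i| < m)%N%:R
   <= avgB m v q (welfare_of v).
Proof.
apply: avg_ge => B /inblocks [BM cB].
rewrite /welfare_of.
have -> : \sum_(i in B) v i = \sum_(i in B) (q + Dd i).
  apply: eq_bigr => i iB; have : q <= v i by have := fintype.subsetP BM i iB; rewrite inE.
  by move=> qv; rewrite /Dd max_l ?subr_ge0 // addrC subrK.
rewrite big_split /= sumr_const cB mulr_natr lerD2l.
rewrite (bigID (fun i => i \in B)) /= -[X in _ <= X]addr0; apply: lerD.
  apply: ler_sum => i _; rewrite -[X in _ <= X]mulr1 ler_wpM2l ?Dd_ge0 //.
  by case: (_ < _)%N; rewrite ?ler01 ?lexx.
rewrite big1 // => i iB.
have [iM|iM] := boolP (i \in M); last first.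
  by rewrite /Dd max_r ?mul0r // subr_le0 ltW // ltNge; move: iM; rewrite inE.
suff -> : (#|M :\ i| < m)%N = false by rewrite mulr0.
have BM' : B \proper M by rewrite finset.properEneq BM andbT; apply/eqP => BMe; move: iB; rewrite BMe iM.
have := proper_card BM'; have := cardsD1 i M; rewrite iM cB /K.
move=> h1 h2; have h3 : #|M| = (#|M :\ i|).+1 by rewrite h1.
apply/negbTE; rewrite -leqNgt; lia.
Qed.


Lemma take_sum_le (s : seq R) k :
  \sum_(x <- take k s) x <= k%:R * q + \sum_(x <- s) Num.max (x - q) 0.
Proof.
elim: s k => [|a s IH] [|k] /=.
- by rewrite !big_nil mul0r addr0.
- by rewrite !big_nil addr0 mulr_ge0 // ltW.
- rewrite big_nil mul0r add0r big_cons; apply: addr_ge0.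
    by rewrite le_max lexx orbT.
  by apply: sumr_ge0 => x _; rewrite le_max lexx orbT.
- rewrite !big_cons; have := IH k.
  have ha : a <= q + Num.max (a - q) 0 by rewrite -lerBlDl le_max lexx.
  rewrite -addn1 natrD; lra.
Qed.

Lemma PW2 : top_sum m v <= m%:R * q + \sum_i Dd i.
Proof.
rewrite /top_sum; apply: le_trans (take_sum_le _ _) _.
apply: lerD.
  by apply: ler_wpM2r; [exact: ltW | rewrite ler_nat geq_minl].
rewrite (perm_big [seq v i | i <- enum 'I_n]); last by rewrite perm_sort.
by rewrite big_map big_enum /=.
Qed.

Definition tU := (1 - alpha) * q + alpha * (1 + delta) * q * (m%:R^-1 * K%:R).
Definition tL := (1 - alpha) * q + alpha * (1 + delta) * q * (m <= #|M|)%N%:R.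

Lemma PT1 : avgB m v q (T_TW m alpha delta v q) <= tU.
Proof.
have [a0 a1] := andP a01.
apply: avg_le => B /inblocks [BM cB]; rewrite /T_TW /tU; case: ifP => hB.
- have hS : \sum_(i in B) Num.min (v i) ((1 + delta) * q) <= #|B|%:R * ((1+delta)*q).
    rewrite mulr_natl -sumr_const; apply: ler_sum => i _.
    by rewrite ge_min lexx orbT.
  have hm : 0 <= m%:R^-1 :> R by rewrite invr_ge0 ler0n.
  have h2 := ler_wpM2l hm hS.
  rewrite cB in h2; nra.
- have cK : K = m by move: hB; rewrite cB /K; lia.
  rewrite cK mulVf ?pnatr_eq0 -?lt0n // mulr1; lra.
Qed.

Lemma PT2 : tL <= avgB m v q (T_TW m alpha delta v q).
Proof.
have [a0 a1] := andP a01.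
apply: avg_ge => B /inblocks [BM cB]; rewrite /T_TW /tL; case: ifP => hB.
- have -> : (m <= #|M|)%N = false by move: hB; rewrite cB /K; lia.
  rewrite mulr0 addr0 lerDr; apply: mulr_ge0; first exact: ltW.
  apply: mulr_ge0; first by rewrite invr_ge0 ler0n.
  apply: sumr_ge0 => i iB; have : q <= v i by have := fintype.subsetP BM i iB; rewrite inE.
  move=> qv; rewrite le_min; apply/andP; split.
    by apply: le_trans qv; exact: ltW.
  by apply: mulr_ge0; [rewrite addr_ge0 // ltW | exact: ltW].
- have -> : (m <= #|M|)%N = true by move: hB; rewrite cB /K; lia.
  by rewrite mulr1; lra.
Qed.

End PW.

Section S.
Local Open Scope ereal_scope.
Lemma int_affine d (T : measurableType d) (R : realType) (P : probability T R)
  (a b : R) (g : T -> R) : (0 <= a)%R -> (0 <= b)%R -> (forall w, 0 <= g w)%R ->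
  measurable_fun setT g ->
  \int[P]_w (a + b * g w)%:E = a%:E + b%:E * \int[P]_w (g w)%:E.
Proof.
move=> a0 b0 g0 mg.
under eq_integral do rewrite EFinD EFinM.
rewrite (ge0_integralD P measurableT); first last.
- apply/measurable_EFinP => /=; apply: measurable_funM => //; exact: measurable_cst.
- by move=> w _; rewrite -EFinM lee_fin mulr_ge0.
- exact: measurable_cst.
- by move=> w _; rewrite lee_fin.
rewrite (integral_cst P measurableT) [X in a%:E * X](_ : _ = 1) ?mule1; last exact: probability_setT.
rewrite (ge0_integralZl_EFin P measurableT) //.
- by move=> w _; rewrite lee_fin.
- exact/measurable_EFinP.
Qed.
End S.

Lemma mmax (R : realType) (q : R) : measurable_fun setT (fun x : R => Num.max (x - q) 0%R).
Proof.
apply: measurable_maxr; last exact: measurable_cst.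
apply: measurable_funB => //; exact: measurable_cst.
Qed.

Arguments pat {R d T n} X q w.

Lemma mmaxE (R : realType) (q : R) :
  measurable_fun setT (fun x : R => (Num.max (x - q) 0)%:E).
Proof. by have := mmax _ q; move/measurable_EFinP. Qed.
Arguments le_int_nm {d T R} mu f g.
Arguments int_affine {d T R} P a b g.
Lemma memb (T : Type) (b : T -> bool) w : (w \in [set x | b x]) = b w.
Proof. by apply/idP/idP => [/set_mem|/mem_set]. Qed.

Theorem mainTheorem11 (R : realType) (d : measure_display) (T : measurableType d)
  (P : probability T R) (F : probability R R) (n m : nat)
  (X : 'I_n -> T -> R) (alpha delta q : R) :
  (0 < m)%N ->
  0 < alpha < 1 -> 0 < delta ->
  F `[0, +oo[%classic = 1%E ->
  iid_with P X F ->
  0 < q ->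
  (\int[P]_w (avgB m (fun i => X i w) q (T_TW m alpha delta (fun i => X i w) q))%:E
     = q%:E)%E ->
  (((Num.min 1 delta) / (2 * (1 + delta)))%:E * \int[P]_w (top_sum m (fun i => X i w))%:E
     <= \int[P]_w (avgB m (fun i => X i w) q (welfare_of (fun i => X i w)))%:E)%E.
Proof.
move=> hm0 ha hd _ iid hq heq.
have [a0 a1] := andP ha.
have pfm := @pat_fun_meas R d T P F n X q iid.
have pm := @pat_meas R d T P F n X q iid.
have isd := @indep_set R d T P F n X q iid.
have mXi := @mX R d T P F n X iid.
set c := Num.min 1 delta / (2 * (1 + delta)).
pose Kf := fun w => (minn m #|pat X q w|)%:R : R.
have mKf : measurable_fun setT Kf := pfm (fun S => (minn m #|S|)%:R).
have Kf0 : forall w, 0 <= Kf w by move=> w; exact: ler0n.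
pose Dd := fun (i : 'I_n) w => Num.max (X i w - q) 0.
have mDd : forall i, measurable_fun setT (Dd i).
  by move=> i; exact: (measurableT_comp (mmax _ q) (mXi i)).
have Dd0 : forall i w, 0 <= Dd i w by move=> i w; rewrite le_max lexx orbT.
pose E := fun (i : 'I_n) => [set w | (#|pat X q w :\ i| < m)%N].
have mE : forall i, measurable (E i) := fun i => pm (fun S => (#|S :\ i| < m)%N).
pose Hs := [set w | (m <= #|pat X q w|)%N].
have mHs : measurable Hs := pm (fun S => (m <= #|S|)%N).
pose J := (\int[F]_x (Num.max (x - q) 0)%:E)%E.
have J0 : (0 <= J)%E by apply: integral_ge0 => x _; rewrite lee_fin le_max lexx orbT.
have hEJ : forall i, (\int[P]_(w in E i) (Dd i w)%:E = P (E i) * J)%E.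
  move=> i; rewrite /Dd (@int_indep _ _ _ P F (X i) (E i) (fun x => (Num.max (x - q) 0)%:E)) //.
  - exact: mmaxE.
  - by move=> x; rewrite lee_fin le_max lexx orbT.
  - by move=> A mA; exact: (isd i (fun S => (#|S| < m)%N)).
have hJ : forall i, (\int[P]_w (Dd i w)%:E = J)%E.
  move=> i.
  have GT : [set w : T | true] = setT by apply/seteqP; split.
  rewrite -GT /Dd (@int_indep _ _ _ P F (X i) _ (fun x => (Num.max (x - q) 0)%:E)) //.
  - rewrite GT [X in (X * _)%E](_ : _ = 1%E) ?mul1e //; exact: probability_setT.
  - by rewrite GT.
  - exact: mmaxE.
  - by move=> x; rewrite lee_fin le_max lexx orbT.
  - by move=> A mA; exact: (isd i (fun S => true)).
have P1 : P setT = 1%E by exact: probability_setT.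
have hKle : (\int[P]_w (Kf w)%:E <= (m%:R)%:E)%E.
  apply: le_trans (le_int_nm P (fun w => (Kf w)%:E) (cst (m%:R)%:E) _) _.
    by move=> w; rewrite lee_fin /Kf ler_nat geq_minl.
  by rewrite (integral_cst P measurableT) [X in (_ * X)%E](_ : _ = 1%E) ?mule1.
have IKfin : (\int[P]_w (Kf w)%:E)%E \is a fin_num.
  rewrite ge0_fin_numE; last by apply: integral_ge0 => w _; rewrite lee_fin.
  by apply: le_lt_trans hKle _; exact: ltry.
set k := fine (\int[P]_w (Kf w)%:E)%E.
have IKE : (\int[P]_w (Kf w)%:E)%E = k%:E by rewrite fineK.
have hA : (q%:E <= ((1 - alpha) * q)%:E +
    (alpha * (1 + delta) * q * m%:R^-1)%:E * \int[P]_w (Kf w)%:E)%E.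
  rewrite -heq -int_affine //; first last.
  - apply: mulr_ge0; last by rewrite invr_ge0 ler0n.
    by apply: mulr_ge0; [apply: mulr_ge0; [exact: ltW | lra] | exact: ltW].
  - by apply: mulr_ge0; [lra | exact: ltW].
  apply: le_int_nm => w; rewrite lee_fin.
  apply: le_trans (PT1 _ _ _ _ _ _ _ hm0 hq ha hd) _; rewrite /tU mulrA; exact: lexx.
rewrite IKE -EFinM -EFinD lee_fin in hA.
have hK : m%:R / (1 + delta) <= k.
  have h1 : alpha * q * 1 <= alpha * q * ((1 + delta) * m%:R^-1 * k) by nra.
  rewrite ler_pM2l in h1; last exact: mulr_gt0.
  have := ler_wpM2l (ler0n _ m) h1; rewrite mulr1 => h2.
  have e : m%:R * ((1 + delta) * m%:R^-1 * k) = (1 + delta) * k.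
    by field; rewrite pnatr_eq0 -lt0n.
  rewrite e in h2; rewrite ler_pdivrMr; last lra.
  lra.
have gI : (\int[P]_w (((m <= #|pat X q w|)%N)%:R)%:E = P Hs)%E.
  rewrite -[in RHS](setIT Hs) -(integral_indic P measurableT mHs).
  by apply: eq_integral => w _; rewrite indicE memb.
have hB : (((1 - alpha) * q)%:E + (alpha * (1 + delta) * q)%:E * P Hs <= q%:E)%E.
  have eB := int_affine P ((1 - alpha) * q) (alpha * (1 + delta) * q)
    (fun w => (((m <= #|pat X q w|)%N)%:R)).
  rewrite -gI -eB; first last.
  - exact: (pfm (fun S => ((m <= #|S|)%N)%:R)).
  - by move=> w; exact: ler0n.
  - by apply: mulr_ge0; [apply: mulr_ge0; [exact: ltW | lra] | exact: ltW].
  - by apply: mulr_ge0; [lra | exact: ltW].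
  rewrite -heq; apply: le_int_nm => w; rewrite lee_fin.
  apply: le_trans _ (PT2 _ _ _ _ _ _ _ hm0 hq ha hd); rewrite /tL; exact: lexx.
set ph := fine (P Hs).
have PHE : P Hs = ph%:E by rewrite fineK // fin_num_measure.
rewrite PHE -EFinM -EFinD lee_fin in hB.
have hph : (1 + delta) * ph <= 1.
  have h1 : alpha * q * ((1 + delta) * ph) <= alpha * q * 1 by nra.
  by rewrite ler_pM2l in h1; last exact: mulr_gt0.
have hcE : forall i, c <= fine (P (E i)).
  move=> i.
  have U : E i `|` Hs = setT.
    apply/seteqP; split => // w _ /=; case: (leqP m #|pat X q w|) => h; [by right | left].
    by apply: leq_ltn_trans h; apply: subset_leq_card; exact: subsetDl.
  have := measureU2 P (mE i) mHs; rewrite U [X in (X <= _)%E](_ : _ = 1%E) // => hU0.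
  have hU1 : (1 <= P (E i) + P Hs)%E := hU0.
  rewrite PHE -(fineK (fin_num_measure P _ (mE i))) -EFinD lee_fin in hU1.
  move: hU1 => hU.
  set pe := fine (P (E i)) in hU *.
  have hmin : Num.min 1 delta <= delta by rewrite ge_min lexx orbT.
  have hmin0 : 0 <= Num.min 1 delta by rewrite le_min ler01 ltW.
  have c1 : c * (1 + delta) = Num.min 1 delta / 2.
    by rewrite /c; field; rewrite gt_eqF //; lra.
  have h4 : (1 - ph) * (1 + delta) <= pe * (1 + delta).
    by apply: ler_wpM2r; lra.
  rewrite -(ler_pM2r (_ : 0 < 1 + delta)); last lra.
  nra.
have hmin1 : Num.min 1 delta <= 1 by rewrite ge_min lexx.
have hmin0 : 0 <= Num.min 1 delta by rewrite le_min ler01 ltW.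
have c0 : 0 <= c by apply: divr_ge0 => //; apply: mulr_ge0 => //; lra.
have mDdE : forall i, measurable_fun setT (fun w => (Dd i w)%:E).
  by move=> i; apply/measurable_EFinP; exact: mDd.
have hTop : (\int[P]_w (top_sum m (X^~ w))%:E <= (m%:R * q)%:E + \sum_(i < n) J)%E.
  apply: le_trans (le_int_nm P _ (fun w => (m%:R * q + \sum_i Dd i w)%:E) _) _.
    by move=> w; rewrite lee_fin; exact: (PW2 _ _ _ _ _ hq).
  under eq_integral do rewrite EFinD -sumEFin.
  rewrite (ge0_integralD P measurableT); first last.
  - exact: emeasurable_sum.
  - by move=> w _; apply: sume_ge0 => i _; rewrite lee_fin.
  - exact: measurable_cst.
  - by move=> w _; rewrite lee_fin; apply: mulr_ge0 => //; exact: ltW.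
  rewrite (integral_cst P measurableT) [X in (_ * X)%E](_ : _ = 1%E) ?mule1 //.
  rewrite (ge0_integral_sum P measurableT) //; last by move=> i w _; rewrite lee_fin.
  rewrite le_eqVlt; apply/orP; left; apply/eqP.
  by congr (_ + _)%E; apply: eq_bigr => i _; exact: hJ.
have hEI : forall i,
    (\int[P]_w (Dd i w * ((#|pat X q w :\ i| < m)%N)%:R)%:E = P (E i) * J)%E.
  move=> i; rewrite -hEJ [RHS]integral_mkcond; apply: eq_integral => w _.
  rewrite /patch /E memb; case: (_ < _)%N; by rewrite ?mulr1 ?mulr0.
have hW : (q%:E * k%:E + \sum_(i < n) (P (E i) * J) <=
    \int[P]_w (avgB m (X^~ w) q (welfare_of (X^~ w)))%:E)%E.
  apply: le_trans _ (le_int_nm P (fun w => (q * Kf w +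
     \sum_i Dd i w * ((#|pat X q w :\ i| < m)%N)%:R)%:E) _ _); last first.
    by move=> w; rewrite lee_fin; exact: (PW1 _ _ _ _ _ _ _ hm0 hq ha hd).
  rewrite le_eqVlt; apply/orP; left; apply/eqP.
  under eq_integral do rewrite EFinD -sumEFin.
  rewrite (ge0_integralD P measurableT); first last.
  - apply: emeasurable_sum => i; apply/measurable_EFinP; apply: measurable_funM.
      exact: mDd.
    exact: (pfm (fun S => ((#|S :\ i| < m)%N)%:R)).
  - by move=> w _; apply: sume_ge0 => i _; rewrite lee_fin mulr_ge0.
  - by apply/measurable_EFinP; apply: measurable_funM => //; exact: measurable_cst.
  - by move=> w _; rewrite lee_fin mulr_ge0 // ltW.
  under eq_integral do rewrite EFinM.
  rewrite (ge0_integralZl_EFin P measurableT) //; first last.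
  - exact: ltW.
  - exact/measurable_EFinP.
  - by move=> w _; rewrite lee_fin.
  rewrite IKE (ge0_integral_sum P measurableT) //; first last.
  - by move=> i w _; rewrite lee_fin mulr_ge0.
  - move=> i; apply/measurable_EFinP; apply: measurable_funM; first exact: mDd.
    exact: (pfm (fun S => ((#|S :\ i| < m)%N)%:R)).
  by congr (_ + _)%E; apply: eq_bigr => i _; rewrite hEI.
have hcm : c * m%:R <= k.
  have hk1 : m%:R <= k * (1 + delta) by rewrite -ler_pdivrMr //; lra.
  have c1 : c * (1 + delta) = Num.min 1 delta / 2.
    by rewrite /c; field; rewrite gt_eqF //; lra.
  rewrite -(ler_pM2r (_ : 0 < 1 + delta)); last lra.
  have : c * m%:R * (1 + delta) = Num.min 1 delta / 2 * m%:R.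
    by rewrite -c1; ring.
  move=> ->; apply: le_trans hk1; have m0 : 0 <= m%:R :> R by exact: ler0n.
  nra.
apply: le_trans (lee_wpmul2l _ hTop) _; first by rewrite lee_fin.
apply: le_trans _ hW.
rewrite ge0_muleDr; first last.
- by apply: sume_ge0.
- by rewrite lee_fin mulr_ge0 // ltW.
rewrite ge0_sume_distrr //; apply: leeD.
- rewrite -!EFinM lee_fin mulrA mulrC; apply: ler_wpM2l; [exact: ltW | exact: hcm].
apply: lee_sum => i _; apply: lee_wpmul2r => //.
rewrite -(fineK (fin_num_measure P _ (mE i))) lee_fin; exact: hcE.
Qed.
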